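(* For all integers $m\ge0$: (i) for all $n\ge0$, $r_{2n}(-q^m,q)=(q;q^2)_n\,T_m(1,-q^{2n},q)$; (ii) for all $n\ge1$, $r_{2n-1}(-q^m,q)=(q;q^2)_n\,U_{m-1}(1,-q^{2n},q)$; (iii) for all $n\ge0$, $r_n(q^{2m+1},q^2)=(-q;q)_n\,V_m(1,-q^n,-q)$.
   Context: $q$ is an indeterminate. $(x;q)_n=\prod_{j=0}^{n-1}(1-q^jx)$; the Gaussian binomial coefficient is $\begin{bmatrix} n\\ j\end{bmatrix}_q=\frac{(q;q)_n}{(q;q)_j(q;q)_{n-j}}$ for $0\le j\le n$ and $0$ otherwise; $r_n(s,q)=\sum_{j=0}^n\begin{bmatrix} n\\ j\end{bmatrix}_q s^j$. The $q$-Chebyshev polynomials are defined by recurrences in $m$: $T_0(x,s,q)=1$, $T_1(x,s,q)=x$, $T_m(x,s,q)=(1+q^{m-1})xT_{m-1}(x,s,q)+q^{m-1}sT_{m-2}(x,s,q)$ for $m\ge2$; $U_{-1}(x,s,q)=0$, $U_0(x,s,q)=1$, $U_m(x,s,q)=(1+q^m)xU_{m-1}(x,s,q)+q^{m-1}sU_{m-2}(x,s,q)$ for $m\ge1$; $V_0(x,s,q)=1$, $V_1(x,s,q)=(1+q)x+qs$, $V_m(x,s,q)=(1+q^{2m-1})xV_{m-1}(x,s,q)-q^{2m-1}s^2V_{m-2}(x,s,q)$ for $m\ge2$. In (iii), $V_m(1,-q^n,-q)$ means $V_m(x,s,p)$ evaluated at $x=1$, $s=-q^n$, $p=-q$. 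*)

(* Defs.v *)
From HB Require Import structures.
From mathcomp Require Import all_boot all_order all_algebra.
From mathcomp Require Import fraction.
Set Implicit Arguments. Unset Strict Implicit. Unset Printing Implicit Defensive.
Import Order.TTheory GRing.Theory Num.Theory.
Local Open Scope ring_scope.

Section QDefs.
Variable F : fieldType.

Definition qpoch (x q : F) (n : nat) : F := \prod_(j < n) (1 - q ^+ j * x).

Definition gauss (q : F) (n j : nat) : F :=
  if (j <= n)%N then qpoch q q n / (qpoch q q j * qpoch q q (n - j)) else 0.

Definition rpoly (n : nat) (s q : F) : F := \sum_(j < n.+1) gauss q n j * s ^+ j.

Fixpoint qT (x s q : F) (m : nat) {struct m} : F :=
  match m with
  | 0 => 1
  | 1 => x
  | S (S k as k1) => (1 + q ^+ k1) * x * qT x s q k1 + q ^+ k1 * s * qT x s q k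
  end.

(* qUm1 x s q m = U_{m-1}(x,s,q); i.e. qUm1 0 = U_{-1} = 0, qUm1 1 = U_0 = 1,
   and U_{k+1} = (1+q^{k+1}) x U_k + q^k s U_{k-1}. *)
Fixpoint qUm1 (x s q : F) (m : nat) {struct m} : F :=
  match m with
  | 0 => 0
  | 1 => 1
  | S (S k as k1) => (1 + q ^+ k1) * x * qUm1 x s q k1 + q ^+ k * s * qUm1 x s q k
  end.

Definition qU (x s q : F) (m : nat) : F := qUm1 x s q m.+1.

Fixpoint qV (x s q : F) (m : nat) {struct m} : F :=
  match m with
  | 0 => 1
  | 1 => (1 + q) * x + q * s
  | S (S k as k1) =>
      (1 + q ^+ (2 * k + 3)) * x * qV x s q k1 - q ^+ (2 * k + 3) * s ^+ 2 * qV x s q k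
  end.
End QDefs.

(* The field Q(q)-like base: fractions of integer polynomials, q the indeterminate. *)
Definition Kq : fieldType := {fraction {poly int}}.
Definition qX : Kq := @FracField.tofrac {poly int} 'X.

(* Main.v *)
Require Import Defs.
From HB Require Import structures.
From mathcomp Require Import all_boot all_order all_algebra.
From mathcomp Require Import fraction.
From mathcomp Require Import ring lra.
Import GRing.Theory.
Local Open Scope ring_scope.

Section Gen.
Variable F : fieldType.
Variable q : F.
Hypothesis hq : forall k : nat, q ^+ k.+1 != 1.

Lemma qpS (x p : F) n : qpoch x p n.+1 = qpoch x p n * (1 - p ^+ n * x).
Proof. by rewrite /qpoch big_ord_recr. Qed.
Lemma qp0 (x p : F) : qpoch x p 0 = 1.
Proof. by rewrite /qpoch big_ord0. Qed.

Lemma P_neq0 n : qpoch q q n != 0.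
Proof.
elim: n => [|n IH]; first by rewrite qp0 oner_neq0.
by rewrite qpS mulf_neq0 // subr_eq0 eq_sym -exprSr hq.
Qed.

Lemma g_gt n j : (n < j)%N -> gauss q n j = 0.
Proof. by move=> H; rewrite /gauss leqNgt H. Qed.
Lemma g_nn n : gauss q n n = 1.
Proof. by rewrite /gauss leqnn subnn qp0 mulr1 divff // P_neq0. Qed.
Lemma g_n0 n : gauss q n 0 = 1.
Proof. by rewrite /gauss leq0n subn0 qp0 mul1r divff // P_neq0. Qed.

Lemma g_split j k :
  [/\ gauss q (j + k).+2 j.+1 =
      qpoch q q (j+k).+1 * (1 - (q^+j*q)*(q^+k*q)) /
       ((qpoch q q j * (1 - q^+j*q)) * (qpoch q q k * (1 - q^+k*q))),
      gauss q (j + k).+1 j = qpoch q q (j+k).+1 /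
       (qpoch q q j * (qpoch q q k * (1 - q^+k*q))) &
      gauss q (j + k).+1 j.+1 = qpoch q q (j+k).+1 /
       ((qpoch q q j * (1 - q^+j*q)) * qpoch q q k)].
Proof.
have exy : q^+(j+k).+1 * q = (q^+j*q)*(q^+k*q).
  by rewrite -!exprSr -exprD addSn addnS.
rewrite /gauss.
have -> : (j.+1 <= (j + k).+2)%N by rewrite ltnS; apply: leq_trans (leqnSn _); apply: leq_addr.
have -> : (j <= (j + k).+1)%N by apply: leq_trans (leqnSn _); apply: leq_addr.
have -> : (j.+1 <= (j + k).+1)%N by rewrite ltnS leq_addr.
have -> : ((j + k).+2 - j.+1 = k.+1)%N by rewrite subSS -addnS addKn.
have -> : ((j + k).+1 - j = k.+1)%N by rewrite -addnS addKn.
have -> : ((j + k).+1 - j.+1 = k)%N by rewrite subSS addKn.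
by rewrite !qpS exy.
Qed.

Lemma nz1 k : 1 - q ^+ k * q != 0.
Proof. by rewrite subr_eq0 eq_sym -exprSr hq. Qed.

Lemma pascalA n j : gauss q n.+1 j.+1 = gauss q n j + q^+j.+1 * gauss q n j.+1.
Proof.
case: (ltngtP j n) => Hjn.
- have -> : n = (j + (n - j.+1)).+1 by rewrite -addnS subnSK // subnKC // ltnW.
  move: (n - j.+1)%N => k.
  case: (g_split j k) => -> -> ->.
  have := P_neq0 j; have := P_neq0 k; have := P_neq0 (j+k).+1.
  have := nz1 j; have := nz1 k.
  rewrite exprSr.
  move: (qpoch q q j) (qpoch q q k) (qpoch q q (j+k).+1) (q^+j*q) (q^+k*q) => b c a x y.
  move=> ny nx na nc nb.
  by field; rewrite nc nx nb ny.
- have h1 : (n < j.+1)%N := ltnW Hjn.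
  by rewrite !g_gt ?mulr0 ?addr0.
- by rewrite Hjn !g_nn (@g_gt n n.+1 (ltnSn n)) mulr0 addr0.
Qed.

Lemma pascalB n j : q^+j.+1 * gauss q n.+1 j.+1 =
   q^+n.+1 * gauss q n j + q^+j.+1 * gauss q n j.+1.
Proof.
case: (ltngtP j n) => Hjn.
- have -> : n = (j + (n - j.+1)).+1 by rewrite -addnS subnSK // subnKC // ltnW.
  move: (n - j.+1)%N => k.
  case: (g_split j k) => -> -> ->.
  have exy : q^+(j+k).+2 = (q^+j*q)*(q^+k*q).
    by rewrite -!exprSr -exprD addSn addnS.
  have := P_neq0 j; have := P_neq0 k; have := P_neq0 (j+k).+1.
  have := nz1 j; have := nz1 k.
  rewrite exprSr exy.
  move: (qpoch q q j) (qpoch q q k) (qpoch q q (j+k).+1) (q^+j*q) (q^+k*q) => b c a x y.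
  move=> ny nx na nc nb.
  by field; rewrite nc nx nb ny.
- have h1 : (n < j.+1)%N := ltnW Hjn.
  by rewrite !g_gt ?mulr0 ?addr0.
- by rewrite Hjn !g_nn (@g_gt n n.+1 (ltnSn n)) mulr0 addr0.
Qed.

Lemma rpolyE n s : rpoly n s q = \sum_(j < n.+2) gauss q n j * s ^+ j.
Proof. by rewrite big_ord_recr /= g_gt // mul0r addr0. Qed.

Lemma recl1 n s : rpoly n.+1 s q = 1 + \sum_(i < n.+1) gauss q n.+1 i.+1 * s ^+ i.+1.
Proof. by rewrite /rpoly big_ord_recl g_n0 expr0 mulr1. Qed.
Lemma recl2 n s : rpoly n s q = 1 + \sum_(i < n.+1) gauss q n i.+1 * s ^+ i.+1.
Proof. by rewrite rpolyE big_ord_recl g_n0 expr0 mulr1. Qed.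

Lemma P1 n s : rpoly n.+1 s q = s * rpoly n s q + rpoly n (q * s) q.
Proof.
rewrite recl1 [rpoly n (q*s) q]recl2 /rpoly mulr_sumr addrCA; congr (_ + _).
rewrite -big_split /=; apply: eq_bigr => i _.
rewrite pascalA !exprS exprMn; ring.
Qed.

Lemma P2 n s : rpoly n.+1 (q * s) q = q ^+ n.+1 * s * rpoly n s q + rpoly n (q * s) q.
Proof.
rewrite recl1 [rpoly n (q*s) q]recl2 /rpoly mulr_sumr addrCA; congr (_ + _).
rewrite -big_split /=; apply: eq_bigr => i _.
have := pascalB n i; rewrite !exprS !exprMn => h.
transitivity (q * q ^+ i * gauss q n.+1 i.+1 * (s * s ^+ i)); first ring.
by rewrite h; ring.
Qed.

Lemma r0 s : rpoly 0 s q = 1.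
Proof. by rewrite /rpoly big_ord1 g_n0 mulr1. Qed.

Lemma Qr N s : rpoly N (q * s) q = rpoly N s q + (q ^+ N - 1) * s * rpoly N.-1 s q.
Proof.
case: N => [|n]; first by rewrite !r0 expr0 subrr; ring.
by rewrite P2 P1 /=; ring.
Qed.

Lemma L2 N s : rpoly N (q * (q * s)) q =
  (1 - q * s) * rpoly N (q * s) q + q ^+ N.+1 * s * rpoly N s q.
Proof.
case: N => [|n]; first by rewrite !r0; ring.
have gqs : rpoly n (q * s) q = rpoly n.+1 s q - s * rpoly n s q.
  by rewrite P1; ring.
rewrite (Qr n.+1 (q * s)) /= gqs (Qr n.+1 s) /= !exprS; ring.
Qed.

Lemma E1rec n s : rpoly n.+2 s q =
  (1 + s) * rpoly n.+1 s q + (q ^+ n.+1 - 1) * s * rpoly n s q.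
Proof. by rewrite P1 Qr /=; ring. Qed.

Lemma Dm1 n : rpoly (2 * n) (-1) q = qpoch q (q ^+ 2) n /\ rpoly (2 * n).+1 (-1) q = 0.
Proof.
elim: n => [|n [IH1 IH2]].
  by rewrite muln0 r0 qp0 P1 !r0; split=> //; ring.
have -> : (2 * n.+1 = (2 * n).+2)%N by rewrite mulnS.
rewrite !E1rec IH1 IH2 qpS -exprM exprSr; split; ring.
Qed.


Lemma part1 n m :
  rpoly (2 * n) (- q ^+ m) q = qpoch q (q ^+ 2) n * qT 1 (- q ^+ (2 * n)) q m.
Proof.
have [D1 D2] := Dm1 n.
suff : forall m, rpoly (2 * n) (- q ^+ m) q = qpoch q (q ^+ 2) n * qT 1 (- q ^+ (2 * n)) q m /\
  rpoly (2 * n) (- q ^+ m.+1) q = qpoch q (q ^+ 2) n * qT 1 (- q ^+ (2 * n)) q m.+1.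
  by move=> H; case: (H m).
elim=> [|k [IH1 IH2]].
  rewrite expr0 D1 /= mulr1; split=> //.
  have -> : - q ^+ 1 = q * (-1) by rewrite expr1 mulrN1.
  rewrite Qr D1.
  case: n D1 D2 => [|n'] D1 D2; first by rewrite muln0 expr0 subrr; ring.
  have -> : ((2 * n'.+1).-1 = (2 * n').+1)%N by rewrite mulnS.
  have [_ D2'] := Dm1 n'. rewrite D2'; ring.
split=> //.
have -> : - q ^+ k.+2 = q * (q * (- q ^+ k)) by rewrite !exprS; ring.
rewrite L2.
have -> : q * (- q ^+ k) = - q ^+ k.+1 by rewrite exprS; ring.
rewrite IH1 IH2 /= !exprS; ring.
Qed.

Lemma part2 n m : (1 <= n)%N ->
  rpoly (2 * n).-1 (- q ^+ m) q = qpoch q (q ^+ 2) n * qUm1 1 (- q ^+ (2 * n)) q m.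
Proof.
case: n => [//|n] _.
have [D1 D2] := Dm1 n.
have [D3 _] := Dm1 n.+1.
have e : ((2 * n.+1).-1 = (2 * n).+1)%N by rewrite mulnS.
have e2 : ((2 * n.+1) = (2 * n).+2)%N by rewrite mulnS.
rewrite e.
suff : forall m, rpoly (2 * n).+1 (- q ^+ m) q = qpoch q (q ^+ 2) n.+1 * qUm1 1 (- q ^+ (2 * n.+1)) q m /\
  rpoly (2 * n).+1 (- q ^+ m.+1) q = qpoch q (q ^+ 2) n.+1 * qUm1 1 (- q ^+ (2 * n.+1)) q m.+1.
  by move=> H; case: (H m).
elim=> [|k [IH1 IH2]].
  rewrite expr0 D2 /= mulr0; split=> //.
  have -> : - q ^+ 1 = q * (-1) by rewrite expr1 mulrN1.
  have := P1 (2 * n).+1 (-1); rewrite -e2 D3 D2 => h.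
  rewrite mulr1; rewrite h; ring.
split=> //.
have -> : - q ^+ k.+2 = q * (q * (- q ^+ k)) by rewrite !exprS; ring.
rewrite L2.
have -> : q * (- q ^+ k) = - q ^+ k.+1 by rewrite exprS; ring.
rewrite IH1 IH2 /= e2 !exprS; ring.
Qed.

End Gen.

Lemma qVS (F : fieldType) (x s p : F) k : qV x s p k.+2 =
  (1 + p ^+ (2 * k + 3)) * x * qV x s p k.+1 - p ^+ (2 * k + 3) * s ^+ 2 * qV x s p k.
Proof. by []. Qed.

Section Gen3.
Variable F : fieldType.
Variable q : F.
Hypothesis hq : forall k : nat, q ^+ k.+1 != 1.

Lemma hp : forall k : nat, (q ^+ 2) ^+ k.+1 != 1.
Proof. by move=> k; rewrite -exprM mulnS addSn hq. Qed.
Let r0p := @r0 _ _ hp.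
Let P1p := @P1 _ _ hp.
Let E1p := @E1rec _ _ hp.
Let Qp := @Qr _ _ hp.
Let L2p := @L2 _ _ hp.

Lemma Cq n : rpoly n q (q ^+ 2) = qpoch (- q) q n.
Proof.
suff : forall n, rpoly n q (q ^+ 2) = qpoch (- q) q n /\ rpoly n.+1 q (q ^+ 2) = qpoch (- q) q n.+1.
  by move=> H; case: (H n).
elim=> [|k [IH1 IH2]].
  rewrite r0p qp0 P1p !r0p qpS qp0; split=> //; ring.
split=> //.
rewrite E1p IH1 IH2 !qpS exprAC !exprS; ring.
Qed.

Lemma part3 n m :
  rpoly n (q ^+ (2 * m + 1)) (q ^+ 2) = qpoch (- q) q n * qV 1 (- q ^+ n) (- q) m.
Proof.
have e m' : q ^+ (2 * m' + 1) = q * (q ^+ m') ^+ 2 by rewrite addn1 exprS exprM exprAC.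
rewrite e.
suff : forall m, rpoly n (q * (q ^+ m) ^+ 2) (q ^+ 2) = qpoch (- q) q n * qV 1 (- q ^+ n) (- q) m /\
   rpoly n (q * (q ^+ m.+1) ^+ 2) (q ^+ 2) = qpoch (- q) q n * qV 1 (- q ^+ n) (- q) m.+1.
  by move=> H; case: (H m).
elim=> [|k [IH1 IH2]].
  rewrite expr0 expr1n mulr1 Cq /= mulr1; split=> //.
  have -> : q * (q ^+ 1) ^+ 2 = q ^+ 2 * q by rewrite expr1; ring.
  rewrite Qp Cq.
  case: n => [|n']; first by rewrite !r0p qp0 expr0 subrr; ring.
  rewrite Cq /= qpS exprAC !exprS; ring.
split=> //.
have -> : q * (q ^+ k.+2) ^+ 2 = q ^+ 2 * (q ^+ 2 * (q * (q ^+ k) ^+ 2)) by rewrite !exprS; ring.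
rewrite L2p.
have -> : q ^+ 2 * (q * (q ^+ k) ^+ 2) = q * (q ^+ k.+1) ^+ 2 by rewrite !exprS; ring.
rewrite IH1 IH2 qVS.
have -> : (- q) ^+ (2 * k + 3) = - (q ^+ 3 * (q ^+ k) ^+ 2).
  by rewrite addnC exprD exprM sqrrN exprAC; ring.
rewrite [(q ^+ 2) ^+ n.+1]exprAC !exprS; ring.
Qed.
End Gen3.

Lemma hqX : forall k : nat, qX ^+ k.+1 != 1.
Proof.
move=> k; rewrite /qX -tofracXn -tofrac1 tofrac_eq.
apply/eqP => h; have := congr1 (fun p : {poly int} => size p) h; rewrite size_polyXn size_poly1.
by [].
Qed.

Theorem corollary2p2 (m : nat) :
  (forall n : nat,
     rpoly (2 * n) (- qX ^+ m) qX
     = qpoch qX (qX ^+ 2) n * qT 1 (- qX ^+ (2 * n)) qX m) /\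
  (forall n : nat, (1 <= n)%N ->
     rpoly (2 * n).-1 (- qX ^+ m) qX
     = qpoch qX (qX ^+ 2) n * qUm1 1 (- qX ^+ (2 * n)) qX m) /\
  (forall n : nat,
     rpoly n (qX ^+ (2 * m + 1)) (qX ^+ 2)
     = qpoch (- qX) qX n * qV 1 (- qX ^+ n) (- qX) m).
Proof.
split; [|split].
- by move=> n; exact: (@part1 _ _ hqX).
- by move=> n; exact: (@part2 _ _ hqX).
- by move=> n; exact: (@part3 _ _ hqX).
Qed.
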